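(* Let $0<\varepsilon\le1$ and let $\mathfrak L_0$ be the linear span of $\{e^{-\alpha x^2/(2\sqrt\varepsilon)}:\alpha\in(0,1)\}$. Then $\mathfrak L_0\subset D(S_\varepsilon)$.
   Context: Work in $L^2(\mathbb{R})$. Let $q$ be multiplication by $x$ and $p=-i\,d/dx$ (self-adjoint; $q$ injective). Let $t=q^{-1}p$ with $D(t)=\{f\in D(p):pf\in D(q^{-1})\}$ and $L^2_0$ the subspace of even functions. Define $S_\varepsilon$ in $L^2_0$ by $D(S_\varepsilon)=\{f\in L^2_0\cap\bigcap_{n\ge0}D(t^{2n+1}):\lim_{N\to\infty}\sum_{n=0}^N\frac{(-1)^n}{2n+1}(\sqrt\varepsilon t)^{2n+1}f$ exists in norm$\}$, $S_\varepsilon f=-\varepsilon^{-1/2}\sum_{n\ge0}\frac{(-1)^n}{2n+1}(\sqrt\varepsilon t)^{2n+1}f$. *)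

(* Defs.v *)
From mathcomp Require Import all_boot all_order all_algebra.
From mathcomp Require Import all_classical all_reals all_analysis.
From mathcomp Require complex.
Import complex.ComplexField.
Import Order.TTheory GRing.Theory Num.Theory numFieldNormedType.Exports.

Set Implicit Arguments.
Unset Strict Implicit.
Unset Printing Implicit Defensive.

Local Open Scope ring_scope.
Local Open Scope classical_set_scope.

Section Defs.
Variable R : realType.

Notation C := (complex.complex R).

Definition rc (r : R) : C := complex.Complex r 0.
Definition iC : C := complex.Complex 0 1.
Definition sqnorm (z : C) : R := complex.Re z ^+ 2 + complex.Im z ^+ 2.

Definition leb := @lebesgue_measure R.

(* f is (a representative of) an element of L^2(R) (complex valued) *)
Definition L2 (f : R -> C) : Prop :=
  [/\ measurable_fun setT (fun x => complex.Re (f x)),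
      measurable_fun setT (fun x => complex.Im (f x)) &
      (\int[leb]_x (sqnorm (f x))%:E < +oo)%E].

(* equality almost everywhere, i.e. equality in L^2 *)
Definition ae_eq (f g : R -> C) : Prop := {ae leb, forall x, f x = g x}.

Definition L2dist2 (f g : R -> C) : \bar R :=
  (\int[leb]_x (sqnorm (f x - g x))%:E)%E.

Definition test_fun (phi : R -> R) : Prop :=
  (forall (n : nat) (x : R), derivable (derive1n n phi) x 1) /\
  (exists M : R, forall x, M < `|x| -> phi x = 0).

Definition weak_deriv (f g : R -> C) : Prop :=
  forall phi, test_fun phi ->
    (\int[leb]_x (complex.Re (f x) * (derive1 phi) x)%:E
       = - \int[leb]_x (complex.Re (g x) * phi x)%:E)%E /\
    (\int[leb]_x (complex.Im (f x) * (derive1 phi) x)%:E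
       = - \int[leb]_x (complex.Im (g x) * phi x)%:E)%E.

(* graph of p = -i d/dx with its self-adjoint domain H^1(R):
   f in D(p) and p f = h (as elements of L^2) *)
Definition p_rel (f h : R -> C) : Prop :=
  [/\ L2 f, L2 h & weak_deriv f (fun x => iC * h x)].

(* graph of q^{-1}, the inverse of the (injective) multiplication operator q:
   g in D(q^{-1}) = Ran q and q^{-1} g = h, i.e. h in D(q) and q h = g *)
Definition qinv_rel (g h : R -> C) : Prop :=
  [/\ L2 g, L2 h & ae_eq g (fun x => rc x * h x)].

(* graph of t = q^{-1} p, D(t) = {f in D(p) : p f in D(q^{-1})} *)
Definition t_rel (f h : R -> C) : Prop :=
  exists g, p_rel f g /\ qinv_rel g h.

Fixpoint tpow (n : nat) (f h : R -> C) : Prop :=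
  match n with
  | 0 => L2 f /\ ae_eq h f
  | n'.+1 => exists k, tpow n' f k /\ t_rel k h
  end.

Definition L2even (f : R -> C) : Prop :=
  L2 f /\ {ae leb, forall x, f (- x) = f x}.

Definition Scoef (eps : R) (n : nat) : R :=
  (-1) ^+ n / (2 * n + 1)%:R * Num.sqrt eps ^+ (2 * n + 1).

Definition in_dom_S (eps : R) (f : R -> C) : Prop :=
  L2even f /\
  exists H : nat -> R -> C,
    (forall n, tpow (2 * n + 1) f (H n)) /\
    exists F : R -> C, L2 F /\
      ((fun N : nat => L2dist2 (fun x => \sum_(n < N.+1) rc (Scoef eps n) * H n x) F)
         @ \oo --> 0%E).

Definition gauss (eps a : R) (x : R) : C :=
  rc (expR (- (a * x ^+ 2) / (2 * Num.sqrt eps))).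

End Defs.

(* Main.v *)
Require Import Defs.
From mathcomp Require Import all_boot all_order all_algebra.
From mathcomp Require Import all_classical all_reals all_analysis.
From mathcomp Require complex.
Import complex.ComplexField.
Import Order.TTheory GRing.Theory Num.Theory.
Local Open Scope ring_scope.
From mathcomp Require Import measurable_realfun.
From mathcomp Require Import ring lra.
Import numFieldNormedType.Exports.

Section G.
Local Open Scope classical_set_scope.
Variable R : realType.
Lemma gauss_bound1 (b x : R) : (0 < b)%R ->
  (expR (- (b * x ^+ 2)) <= expR (1 / (4 * b)) * expR (- `|x|))%R.
Proof.
move=> b0; rewrite -expRD ler_expR.
have e : (1 / (4 * b) - `|x| + b * x ^+ 2 = (2 * b * `|x| - 1) ^+ 2 / (4 * b))%R.
  rewrite -[x ^+ 2]real_normK ?num_real //.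
  by field; rewrite gt_eqF.
rewrite -subr_ge0 opprK e.
by apply: divr_ge0; [exact: sqr_ge0 | rewrite mulr_ge0 // ltW].
Qed.

Lemma gauss_bound2 (b x : R) : (0 < b)%R ->
  (x ^+ 2 * expR (- (b * x ^+ 2)) <= (2 / b) * expR (- ((b / 2) * x ^+ 2)))%R.
Proof.
move=> b0.
have h1 : (x ^+ 2 <= (2 / b) * expR ((b / 2) * x ^+ 2))%R.
  apply: (@le_trans _ _ ((2 / b) * (1 + (b / 2) * x ^+ 2))%R).
    rewrite mulrDr mulr1 mulrA (_ : 2 / b * (b / 2) = 1)%R; last by field; rewrite gt_eqF.
    by rewrite mul1r lerDr divr_ge0 // ltW.
  by rewrite ler_wpM2l ?expR_ge1Dx // divr_ge0 // ltW.
apply: (@le_trans _ _ ((2 / b) * expR ((b / 2) * x ^+ 2) * expR (- (b * x ^+ 2)))%R).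
  by rewrite ler_wpM2r // expR_ge0.
rewrite -mulrA -expRD; apply: ler_wpM2l; first by rewrite divr_ge0 // ltW.
rewrite ler_expR; have -> : (b / 2 * x ^+ 2 + - (b * x ^+ 2) = - (b / 2 * x ^+ 2))%R by field.
by [].
Qed.

End G.

Section S.
Local Open Scope classical_set_scope.
Variable R : realType.
Local Open Scope ereal_scope.

Lemma int_expNabs : \int[@leb R]_x (expR (- `|x|))%:E < +oo.
Proof.
rewrite /leb ge0_symfun_integralT; last 3 first.
- by move=> x; exact: expR_ge0.
- move=> x; apply: continuous_comp; last exact: continuous_expR.
  apply: continuousN; exact: norm_continuous.
- by move=> x /=; rewrite normrN.
rewrite (_ : [set x | _] = `[0%R, +oo[%classic); last first.
  by apply/seteqP; split => x/=; rewrite in_itv/= andbT.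
under eq_integral => x.
  rewrite inE/= in_itv/= andbT => x0.
  rewrite ger0_norm//.
  over.
rewrite (@ge0_continuous_FTC2y _ _ (fun x : R => (- expR (- x))%R) 0%R 0%R).
- by rewrite oppr0 expR0 sub0e EFinN oppeK mule1 ltry.
- by move=> x _; exact: expR_ge0.
- apply: continuous_subspaceT => x; apply: continuous_comp; last exact: continuous_expR.
  exact: continuousN.
- rewrite -oppr0; apply: cvgN.
  exact: cvgr_expR.
- by move=> x _; apply: derivableN; apply: ex_derive.
- apply: cvgN; apply/cvg_at_right_filter.
  apply: continuous_comp; last exact: continuous_expR.
  exact: continuousN.
- move=> x _.
  rewrite derive1_comp// derive1N// derive1_id mulN1r derive1_comp// derive1E.
  by have /funeqP -> := @derive_expR R; rewrite derive1N // derive1_id mulrN1 opprK.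
Qed.

Lemma dom_fin (f : R -> R) (K : R) : measurable_fun setT f ->
  (forall x, 0 <= f x <= K * expR (- `|x|))%R ->
  \int[@leb R]_x (f x)%:E < +oo.
Proof.
move=> mf hf.
have K0 : (0 <= K)%R.
  have /andP[h1 h2] := hf 0%R.
  have := le_trans h1 h2.
  by rewrite pmulr_lge0 // expR_gt0.
have mE : measurable_fun setT (fun x : R => expR (- `|x|)).
  apply: continuous_measurable_fun => x; apply: continuous_comp; last exact: continuous_expR.
  apply: continuousN; exact: norm_continuous.
apply: (@le_lt_trans _ _ (\int[@leb R]_x (K%:E * (expR (- `|x|))%:E))).
  apply: ge0_le_integral => //.
  - by move=> x _; rewrite lee_fin; have /andP[] := hf x.
  - by apply/measurable_EFinP.
  - by apply/measurable_EFinP; apply: measurable_funM => //.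
  - by move=> x _; rewrite lee_fin; have /andP[] := hf x.
rewrite ge0_integralZl_EFin //.
all: try (by move=> x _; rewrite lee_fin expR_ge0); try (by apply/measurable_EFinP).
apply: lte_mul_pinfty => //; exact: int_expNabs.
Qed.

Definition gb (b x : R) := expR (- (b * x ^+ 2)).

Lemma mgb b : measurable_fun setT (gb b).
Proof.
apply: continuous_measurable_fun => x; apply: continuous_comp; last exact: continuous_expR.
apply: continuousN; apply: continuousM; first exact: cst_continuous.
exact: exprn_continuous.
Qed.

Lemma gb_fin b : (0 < b)%R -> \int[@leb R]_x (gb b x)%:E < +oo.
Proof.
move=> b0; apply: (@dom_fin _ (expR (1 / (4 * b)))); first exact: mgb.
by move=> x; rewrite expR_ge0 gauss_bound1.
Qed.

Lemma xgb_fin b : (0 < b)%R -> \int[@leb R]_x (x ^+ 2 * gb b x)%:E < +oo.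
Proof.
move=> b0; apply: (@dom_fin _ (2 / b * expR (1 / (4 * (b / 2))))).
  apply: measurable_funM; last exact: mgb.
  by apply: continuous_measurable_fun; exact: exprn_continuous.
move=> x; rewrite mulr_ge0 ?sqr_ge0 ?expR_ge0 //=.
rewrite /gb.
apply: (le_trans (@gauss_bound2 R b x b0)).
rewrite -[X in (_ <= X)%R]mulrA.
apply: ler_wpM2l; first by rewrite divr_ge0 // ltW.
by apply: gauss_bound1; rewrite divr_gt0.
Qed.
End S.
Set Implicit Arguments. Unset Strict Implicit. Unset Printing Implicit Defensive.

Section L2S.
Local Open Scope classical_set_scope.
Variable R : realType.
Notation C := (complex.complex R).
Local Open Scope ereal_scope.

Lemma sqnorm_ge0 (z : C) : (0 <= sqnorm z)%R.
Proof. by rewrite /sqnorm addr_ge0 // sqr_ge0. Qed.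

Lemma sqnormD (z w : C) : (sqnorm (z + w)%R <= 2 * sqnorm z + 2 * sqnorm w)%R.
Proof.
case: z => a b; case: w => c d; rewrite /sqnorm /= -subr_ge0.
have -> : (2 * (a ^+ 2 + b ^+ 2) + 2 * (c ^+ 2 + d ^+ 2) - ((a + c) ^+ 2 + (b + d) ^+ 2) = (a - c) ^+ 2 + (b - d) ^+ 2)%R by ring.
by rewrite addr_ge0 // sqr_ge0.
Qed.

Lemma sqnormM (z w : C) : sqnorm (z * w)%R = (sqnorm z * sqnorm w)%R.
Proof. case: z => a b; case: w => c d; rewrite /sqnorm /=. ring. Qed.

Lemma ReD (z w : C) : complex.Re (z + w)%R = (complex.Re z + complex.Re w)%R.
Proof. by case: z => a b; case: w => c d. Qed.
Lemma ImD (z w : C) : complex.Im (z + w)%R = (complex.Im z + complex.Im w)%R.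
Proof. by case: z => a b; case: w => c d. Qed.
Lemma ReM (z w : C) : complex.Re (z * w)%R = (complex.Re z * complex.Re w - complex.Im z * complex.Im w)%R.
Proof. by case: z => a b; case: w => c d. Qed.
Lemma ImM (z w : C) : complex.Im (z * w)%R = (complex.Re z * complex.Im w + complex.Im z * complex.Re w)%R.
Proof. by case: z => a b; case: w => c d. Qed.

Lemma msqnorm (f : R -> C) : measurable_fun setT (fun x => complex.Re (f x)) ->
  measurable_fun setT (fun x => complex.Im (f x)) ->
  measurable_fun setT (fun x => sqnorm (f x)).
Proof.
move=> mr mi; rewrite /sqnorm.
by apply: measurable_funD; apply: measurable_funX.
Qed.

Lemma L2_add (f g : R -> C) : L2 f -> L2 g -> L2 (fun x => f x + g x)%R.
Proof.
move=> [mfr mfi ff] [mgr mgi fg].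
have mr : measurable_fun setT (fun x => complex.Re (f x + g x)%R).
  by rewrite (_ : (fun x => _) = (fun x => complex.Re (f x) + complex.Re (g x))%R);
    [apply: measurable_funD | apply/funext => x; rewrite ReD].
have mi : measurable_fun setT (fun x => complex.Im (f x + g x)%R).
  by rewrite (_ : (fun x => _) = (fun x => complex.Im (f x) + complex.Im (g x))%R);
    [apply: measurable_funD | apply/funext => x; rewrite ImD].
split => //.
have msf := msqnorm mfr mfi; have msg := msqnorm mgr mgi.
apply: (@le_lt_trans _ _ (\int[@leb R]_x ((2 * sqnorm (f x))%:E + (2 * sqnorm (g x))%:E))).
  apply: ge0_le_integral => //.
  - by move=> x _; rewrite lee_fin sqnorm_ge0.
  - by apply/measurable_EFinP; exact: msqnorm.
  - apply: emeasurable_funD; apply/measurable_EFinP; apply: measurable_funM => //.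
  - by move=> x _; rewrite -EFinD lee_fin sqnormD.
rewrite ge0_integralD //; last 4 first.
- by move=> x _; rewrite lee_fin mulr_ge0 // sqnorm_ge0.
- by apply/measurable_EFinP; apply: measurable_funM.
- by move=> x _; rewrite lee_fin mulr_ge0 // sqnorm_ge0.
- by apply/measurable_EFinP; apply: measurable_funM.
apply: lte_add_pinfty.
- under eq_integral do rewrite EFinM.
  rewrite ge0_integralZl_EFin //.
  + by apply: lte_mul_pinfty.
  + by move=> x _; rewrite lee_fin sqnorm_ge0.
  + by apply/measurable_EFinP.
- under eq_integral do rewrite EFinM.
  rewrite ge0_integralZl_EFin //.
  + by apply: lte_mul_pinfty.
  + by move=> x _; rewrite lee_fin sqnorm_ge0.
  + by apply/measurable_EFinP.
Qed.

Lemma L2_scale (c : C) (f : R -> C) : L2 f -> L2 (fun x => c * f x)%R.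
Proof.
move=> [mfr mfi ff].
have mr : measurable_fun setT (fun x => complex.Re (c * f x)%R).
  rewrite (_ : (fun x => _) = (fun x => complex.Re c * complex.Re (f x) - complex.Im c * complex.Im (f x))%R); last by apply/funext => x; rewrite ReM.
  apply: measurable_funB; apply: measurable_funM => //.
have mi : measurable_fun setT (fun x => complex.Im (c * f x)%R).
  rewrite (_ : (fun x => _) = (fun x => complex.Re c * complex.Im (f x) + complex.Im c * complex.Re (f x))%R); last by apply/funext => x; rewrite ImM.
  apply: measurable_funD; apply: measurable_funM => //.
split => //.
under eq_integral do rewrite sqnormM EFinM.
rewrite ge0_integralZl_EFin //.
+ by apply: lte_mul_pinfty => //; rewrite lee_fin sqnorm_ge0.
+ by move=> x _; rewrite lee_fin sqnorm_ge0.
+ by apply/measurable_EFinP; exact: msqnorm.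
+ exact: sqnorm_ge0.
Qed.

Lemma L2_0 : L2 (fun _ : R => 0%R : C).
Proof.
split => //.
rewrite /sqnorm /= expr0n /= addr0 integral0; exact: ltry.
Qed.

Lemma L2_sum (I : Type) (s : seq I) (F : I -> R -> C) :
  (forall i, L2 (F i)) -> L2 (fun x => \sum_(i <- s) F i x)%R.
Proof.
move=> hF; elim: s => [|i s IH].
  by under [X in L2 X]funext do rewrite big_nil; exact: L2_0.
under [X in L2 X]funext do rewrite big_cons.
exact: L2_add.
Qed.

End L2S.

Section QS.
Local Open Scope classical_set_scope.
Variable R : realType.
Notation C := (complex.complex R).
Local Open Scope ereal_scope.

Definition Q (f : R -> C) := \int[@leb R]_x (sqnorm (f x))%:E.

Lemma Q_ge0 f : 0 <= Q f.
Proof. by apply: integral_ge0 => x _; rewrite lee_fin sqnorm_ge0. Qed.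

Lemma Q_fin f : L2 f -> Q f \is a fin_num.
Proof. by case=> _ _ h; rewrite ge0_fin_numE // Q_ge0. Qed.

Lemma Q_add_le (f g : R -> C) : L2 f -> L2 g ->
  Q (fun x => f x + g x)%R <= 2%:E * Q f + 2%:E * Q g.
Proof.
move=> [mfr mfi ff] [mgr mgi fg].
have msf := msqnorm mfr mfi; have msg := msqnorm mgr mgi.
have [mr mi _] := L2_add (And3 mfr mfi ff) (And3 mgr mgi fg).
apply: (@le_trans _ _ (\int[@leb R]_x ((2 * sqnorm (f x))%:E + (2 * sqnorm (g x))%:E))).
  apply: ge0_le_integral => //.
  - by move=> x _; rewrite lee_fin sqnorm_ge0.
  - by apply/measurable_EFinP; exact: msqnorm.
  - apply: emeasurable_funD; apply/measurable_EFinP; apply: measurable_funM => //.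
  - by move=> x _; rewrite -EFinD lee_fin sqnormD.
rewrite ge0_integralD //; last 4 first.
- by move=> x _; rewrite lee_fin mulr_ge0 // sqnorm_ge0.
- by apply/measurable_EFinP; apply: measurable_funM.
- by move=> x _; rewrite lee_fin mulr_ge0 // sqnorm_ge0.
- by apply/measurable_EFinP; apply: measurable_funM.
under eq_integral do rewrite EFinM.
rewrite ge0_integralZl_EFin //; last 2 first.
  + by move=> x _; rewrite lee_fin sqnorm_ge0.
  + by apply/measurable_EFinP.
have -> : \int[@leb R]_x (2 * sqnorm (g x))%:E = 2%:E * Q g.
  under eq_integral do rewrite EFinM.
  rewrite ge0_integralZl_EFin //.
  + by move=> x _; rewrite lee_fin sqnorm_ge0.
  + by apply/measurable_EFinP.
by [].
Qed.

Lemma Q_scale (c : C) f : L2 f -> Q (fun x => c * f x)%R = (sqnorm c)%:E * Q f.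
Proof.
move=> [mfr mfi ff]; rewrite /Q /=.
under eq_integral do rewrite sqnormM EFinM.
rewrite ge0_integralZl_EFin //.
+ by move=> x _; rewrite lee_fin sqnorm_ge0.
+ by apply/measurable_EFinP; exact: msqnorm.
+ exact: sqnorm_ge0.
Qed.

Lemma Q_cvg_sum (I : Type) (s : seq I) (W : I -> nat -> C) (phi : I -> R -> C) :
  (forall i, L2 (phi i)) -> (forall i, (fun N => sqnorm (W i N)) @ \oo --> 0%R) ->
  (fun N => Q (fun x => \sum_(i <- s) W i N * phi i x)%R) @ \oo --> 0.
Proof.
move=> hphi hW; elim: s => [|i s IH].
  under eq_fun => N.
    rewrite (_ : Q _ = 0); first over.
    rewrite /Q; under eq_integral do rewrite big_nil /sqnorm /= expr0n /= addr0.
    by rewrite integral0.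
  exact: cvg_cst.
have L2r N : L2 (fun x => \sum_(j <- s) W j N * phi j x)%R.
  by apply: L2_sum => j; apply: L2_scale.
apply: (@squeeze_cvge _ _ _ _ (fun=> 0) _
   (fun N => 2%:E * Q (fun x => W i N * phi i x)%R +
             2%:E * Q (fun x => \sum_(j <- s) W j N * phi j x)%R)).
- apply: nearW => N; rewrite Q_ge0 /=.
  rewrite (_ : (fun x => _) = (fun x => W i N * phi i x + \sum_(j <- s) W j N * phi j x)%R); last by apply/funext => x; rewrite big_cons.
  by apply: Q_add_le => //; apply: L2_scale.
- exact: cvg_cst.
- rewrite -[0]adde0 -{1}(mule0 2%:E).
  apply: cvgeD => //.
    apply: cvgeZl => //.
    under eq_fun do rewrite Q_scale //.
    rewrite -(mul0e (Q (phi i))).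
    apply: cvgeZr; first exact: Q_fin.
    by apply: cvg_EFin; [apply: nearW | exact: hW].
  rewrite -(mule0 2%:E); exact: cvgeZl.
Qed.
End QS.

Section IBP.
Local Open Scope classical_set_scope.
Variable R : realType.
Local Open Scope ereal_scope.

Lemma int_restrict (g : R -> R) (M : R) : (forall x, M < `|x| -> g x = 0)%R ->
  \int[@leb R]_x (g x)%:E = \int[@leb R]_(x in `[(- M)%R, M]) (g x)%:E.
Proof.
move=> hg; rewrite /leb [RHS]integral_mkcond.
apply: eq_integral => x _.
rewrite patchE; case: ifPn => // hx.
rewrite hg //; move: hx; rewrite notin_setE /= in_itv /= -ler_norml.
by move/negP; rewrite -ltNge.
Qed.

Lemma der_cont (f : R -> R) x : derivable f x 1 -> {for x, continuous f}.
Proof. by move=> h; apply: differentiable_continuous; rewrite -derivable1_diffP. Qed.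

Lemma ibp (u u' phi : R -> R) : (forall x : R, is_derive x (1%R:R) u (u' x)) -> continuous u' ->
  test_fun phi ->
  \int[@leb R]_x (u x * derive1 phi x)%:E = - \int[@leb R]_x (u' x * phi x)%:E.
Proof.
move=> hu cu' [hd [M0 hM0]].
have dphi x : derivable phi x 1 by exact: (hd 0%N x).
have dphi' x : derivable (derive1 phi) x 1 by exact: (hd 1%N x).
have du x : derivable u x 1 by exact: ex_derive.
pose M := (`|M0| + 1)%R.
have M0M : (M0 < M)%R by rewrite /M; apply: (le_lt_trans (ler_norm M0)); rewrite ltrDl.
have phi0 x : (M0 < `|x|)%R -> phi x = 0%R by exact: hM0.
have phi'0 x : (`|M0| < `|x|)%R -> derive1 phi x = 0%R.
  move=> hx; rewrite derive1E.
  rewrite (@near_eq_derive _ _ _ phi (cst 0%R)); first by rewrite derive_cst.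
  have e0 : (0 < `|x| - `|M0|)%R by rewrite subr_gt0.
  near=> y; rewrite /cst phi0 //.
  have : (`|x - y| < `|x| - `|M0|)%R.
    by near: y; apply: cvgr_dist_lt.
  move=> h; apply: (le_lt_trans (ler_norm M0)).
  have h2 := ler_normD (x - y)%R y; rewrite subrK in h2.
  lra.
rewrite (@int_restrict _ M); last first.
  move=> x hx; rewrite phi'0 ?mulr0 //; apply: le_lt_trans hx.
  by rewrite /M lerDl.
rewrite [in RHS](@int_restrict _ M); last first.
  move=> x hx; rewrite phi0 ?mulr0 //; exact: lt_trans hx.
rewrite /leb (@integration_by_parts _ u phi u' (derive1 phi)).
- rewrite !phi0 ?mulr0 ?subr0 ?sub0e //; first by rewrite normrN ger0_norm // /M addr_ge0.
  by rewrite ger0_norm // /M addr_ge0.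
- by rewrite /M -ltrN2 opprK ltrNl; apply: (@lt_le_trans _ _ 0%R); rewrite ?oppr_lt0 ?ltr_pwDr ?normr_ge0.
- exact: continuous_subspaceT.
- split.
  + by move=> x _; exact: du.
  + by apply: cvg_at_right_filter; exact: der_cont.
  + by apply: cvg_at_left_filter; exact: der_cont.
- by move=> x _; rewrite derive1E; exact: derive_val.
- by apply: continuous_subspaceT => x; exact: der_cont.
- split.
  + by move=> x _; exact: dphi.
  + by apply: cvg_at_right_filter; exact: der_cont.
  + by apply: cvg_at_left_filter; exact: der_cont.
- by [].
Unshelve. all: by end_near.
Qed.
End IBP.

Section E.
Local Open Scope classical_set_scope.
Variable R : realType.

Lemma is_derive_expR_comp (g : R -> R) (x dg : R) : is_derive x 1 g dg ->
  is_derive x 1 (fun y => expR (g y)) (expR (g x) * dg).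
Proof.
move=> hg.
have dg0 : derivable g x 1 by exact: ex_derive.
have de : derivable (fun y => expR (g y)) x 1.
  rewrite derivable1_diffP; apply: (@differentiable_comp _ _ _ _ g expR).
    by rewrite -derivable1_diffP.
  by rewrite -derivable1_diffP; exact: derivable_expR.
apply: DeriveDef => //.
rewrite -derive1E (_ : (fun y => expR (g y)) = expR \o g) //.
rewrite derive1_comp //.
rewrite [g^`() x]derive1E derive_val derive1E.
have /funeqP -> := @derive_expR R.
by [].
Qed.

Lemma is_derive_quad (c x : R) : is_derive x 1 (fun y => c * y ^+ 2) (c * (2 * x)).
Proof.
have h1 : is_derive x 1 (@id R ^+ 2) ((2%:R * (id x) ^+ 1) *: 1).
  apply: is_deriveX.
have h2 := is_deriveZ c h1.
rewrite (_ : (fun y => c * y ^+ 2) = c \*: (@id R ^+ 2)); last first.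
  by apply/funext => y /=; rewrite expr2.
apply: (is_derive_eq h2).
by rewrite expr1 /GRing.scale /= mulr1.
Qed.
End E.

Section Main.
Local Open Scope classical_set_scope.
Variable R : realType.
Notation C := (complex.complex R).
Variable eps : R.
Hypothesis eps0 : 0 < eps.
Variable m : nat.
Variable a : 'I_m -> R.
Hypothesis ha : forall k, 0 < a k < 1.

Let se := Num.sqrt eps.
Let se0 : 0 < se. Proof. by rewrite sqrtr_gt0. Qed.
Let sen0 : se != 0. Proof. by rewrite gt_eqF. Qed.

Definition ee k (x : R) := expR (- (a k * x ^+ 2) / (2 * Num.sqrt eps)).
Definition kap k := a k / Num.sqrt eps.
Let kap0 k : 0 < kap k.
Proof. by rewrite /kap divr_gt0 //; case/andP: (ha k). Qed.

Lemma ee_der (k : 'I_m) (x : R) : is_derive x (1:R) (ee k) (- kap k * (x * ee k x)).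
Proof.
have h := is_derive_expR_comp (is_derive_quad (- a k / (2 * se)) x).
rewrite (_ : ee k = fun y => expR (- a k / (2 * se) * y ^+ 2)); last first.
  by apply/funext => y; rewrite /ee -/se; congr expR; ring.
apply: (is_derive_eq h).
rewrite /ee -/se /kap -/se.
rewrite (_ : - a k / (2 * se) * x ^+ 2 = - (a k * x ^+ 2) / (2 * se)); last by ring.
by field.
Qed.

Lemma ee_cont k : continuous (ee k).
Proof. by move=> x; apply: der_cont; have [] := ee_der k x. Qed.

Lemma ee_sq k x : ee k x ^+ 2 = @gb R (kap k) x.
Proof.
rewrite /ee /gb -expRM_natl; congr expR; rewrite /kap; field.
exact: sen0.
Qed.

Lemma ee_even k x : ee k (- x) = ee k x.
Proof. by rewrite /ee sqrrN. Qed.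

Lemma L2_rc (r : R -> R) : continuous r -> (\int[@leb R]_x ((r x) ^+ 2)%:E < +oo)%E ->
  L2 (fun x => rc (r x)).
Proof.
move=> cr hr; split => //=.
- exact: continuous_measurable_fun.
- rewrite /sqnorm /=.
  by under eq_integral do rewrite expr0n /= addr0.
Qed.

Lemma L2_ee k : L2 (fun x => rc (ee k x)).
Proof.
apply: L2_rc; first exact: ee_cont.
under eq_integral do rewrite ee_sq.
exact: gb_fin.
Qed.

Lemma L2_xee k : L2 (fun x => rc (x * ee k x)).
Proof.
apply: L2_rc.
  by move=> x; apply: continuousM => //; exact: ee_cont.
under eq_integral do rewrite exprMn ee_sq.
exact: xgb_fin.
Qed.


Notation iCR := (@iC R).
Definition Lam k : C := iCR * rc (kap k).
Definition fd (d : 'I_m -> C) (x : R) : C := \sum_(k < m) d k * rc (ee k x).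
Definition gd (d : 'I_m -> C) (x : R) : C := \sum_(k < m) (d k * Lam k) * rc (x * ee k x).

Lemma cext (z w : C) : complex.Re z = complex.Re w -> complex.Im z = complex.Im w -> z = w.
Proof. by case: z => ? ?; case: w => ? ? /= -> ->. Qed.

Lemma rcM (x y : R) : rc (x * y) = rc x * rc y.
Proof. by apply: cext; rewrite ?ReM ?ImM /= ?mulr0 ?mul0r ?subr0 ?addr0. Qed.

Lemma Re_sum (I : Type) (s : seq I) (F : I -> C) :
  complex.Re (\sum_(i <- s) F i) = \sum_(i <- s) complex.Re (F i).
Proof. elim: s => [|i s IH]; first by rewrite !big_nil. by rewrite !big_cons ReD IH. Qed.
Lemma Im_sum (I : Type) (s : seq I) (F : I -> C) :
  complex.Im (\sum_(i <- s) F i) = \sum_(i <- s) complex.Im (F i).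
Proof. elim: s => [|i s IH]; first by rewrite !big_nil. by rewrite !big_cons ImD IH. Qed.
Lemma Re_rc (w : C) (r : R) : complex.Re (w * rc r) = complex.Re w * r.
Proof. by rewrite ReM /= mulr0 subr0. Qed.
Lemma Im_rc (w : C) (r : R) : complex.Im (w * rc r) = complex.Im w * r.
Proof. by rewrite ImM /= mulr0 add0r. Qed.
Lemma iCLam (w : C) k : iCR * (w * Lam k) = w * rc (- kap k).
Proof.
rewrite /Lam /iC /rc; case: w => p q /=.
by apply: cext; rewrite !(ReM, ImM) /=; ring.
Qed.

Lemma is_derive_scal (f : R -> R) (c x df : R) : is_derive x (1:R) f df ->
  is_derive x (1:R) (fun y => c * f y) (c * df).
Proof.
move=> h; have h2 := is_deriveZ c h.
rewrite (_ : (fun y => c * f y) = c \*: f) //.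
Qed.

Lemma wd_real (r : 'I_m -> R) (phi : R -> R) : test_fun phi ->
  (\int[@leb R]_x ((\sum_(k < m) r k * ee k x) * derive1 phi x)%:E =
  - \int[@leb R]_x ((\sum_(k < m) r k * (- kap k * (x * ee k x))) * phi x)%:E)%E.
Proof.
move=> tphi; apply: ibp => //.
- move=> x.
  have h : is_derive x (1:R) (\sum_(k < m) (fun y => r k * ee k y)) (\sum_(k < m) r k * (- kap k * (x * ee k x))).
    apply: is_derive_sum => k; exact: is_derive_scal (ee_der k x).
  by rewrite fct_sumE in h.
- apply: continuous_big.
    exact: (@pseudometric_normed_Zmodule.add_continuous R R^o).
  move=> k _ x.
  apply: (@continuousM _ R^o (fun=> r k) (fun y => - kap k * (y * ee k y))).
    exact: cst_continuous.
  apply: (@continuousM _ R^o (fun=> - kap k) (fun y => y * ee k y)).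
    exact: cst_continuous.
  apply: (@continuousM _ R^o id (ee k)) => //.
  exact: ee_cont.
Qed.

Lemma wd (d : 'I_m -> C) : weak_deriv (fd d) (fun x => iCR * gd d x).
Proof.
move=> phi tphi; split.
- have := wd_real (fun k => complex.Re (d k)) tphi.
  congr (_ = _).
    apply: eq_integral => x _; congr (_ * _)%:E.
    by rewrite /fd Re_sum; apply: eq_bigr => k _; rewrite Re_rc.
  congr (- _)%E; apply: eq_integral => x _; congr (_ * _)%:E.
  rewrite /gd mulr_sumr Re_sum; apply: eq_bigr => k _.
  by rewrite mulrA iCLam -mulrA -rcM Re_rc.
- have := wd_real (fun k => complex.Im (d k)) tphi.
  congr (_ = _).
    apply: eq_integral => x _; congr (_ * _)%:E.
    by rewrite /fd Im_sum; apply: eq_bigr => k _; rewrite Im_rc.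
  congr (- _)%E; apply: eq_integral => x _; congr (_ * _)%:E.
  rewrite /gd mulr_sumr Im_sum; apply: eq_bigr => k _.
  by rewrite mulrA iCLam -mulrA -rcM Im_rc.
Qed.

Lemma L2_fd d : L2 (fd d).
Proof. by rewrite /fd; apply: L2_sum => k; apply: L2_scale; exact: L2_ee. Qed.

Lemma L2_gd d : L2 (gd d).
Proof. by rewrite /gd; apply: L2_sum => k; apply: L2_scale; exact: L2_xee. Qed.

Lemma t_fd d : t_rel (fd d) (fd (fun k => d k * Lam k)).
Proof.
exists (gd d); split.
  by split; [exact: L2_fd | exact: L2_gd | exact: wd].
split; [exact: L2_gd | exact: L2_fd |].
apply: aeW => x; rewrite /gd /fd mulr_sumr; apply: eq_bigr => k _.
by rewrite rcM mulrCA.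
Qed.

Lemma tpow_fd c j : tpow j (fd c) (fd (fun k => c k * Lam k ^+ j)).
Proof.
elim: j => [|j IH] /=.
  split; first exact: L2_fd.
  by apply: aeW => x; rewrite /fd; apply: eq_bigr => k _; rewrite expr0 mulr1.
exists (fd (fun k => c k * Lam k ^+ j)); split => //.
have := t_fd (fun k => c k * Lam k ^+ j); congr t_rel.
by apply/funext => x; rewrite /fd; apply: eq_bigr => k _; rewrite exprSr mulrA.
Qed.

Lemma even_fd c : L2even (fd c).
Proof.
split; first exact: L2_fd.
by apply: aeW => x; rewrite /fd; apply: eq_bigr => k _; rewrite ee_even.
Qed.

End Main.

Section Fin.
Local Open Scope classical_set_scope.
Variable R : realType.
Notation C := (complex.complex R).
Notation iCR := (@iC R).

Lemma rc1 : rc (1 : R) = 1 :> C.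
Proof. by []. Qed.

Lemma rcX (x : R) j : rc (x ^+ j) = rc x ^+ j.
Proof. elim: j => [|j IH]; first by rewrite !expr0. by rewrite !exprS rcM IH. Qed.

Lemma rcD (x y : R) : rc (x + y) = rc x + rc y.
Proof. by apply: cext; rewrite ?ReD ?ImD /= ?addr0. Qed.

Lemma rc_sum (I : Type) (s : seq I) (F : I -> R) : rc (\sum_(i <- s) F i) = \sum_(i <- s) rc (F i).
Proof. elim: s => [|i s IH]; first by rewrite !big_nil. by rewrite !big_cons rcD IH. Qed.

Lemma i2 : iCR ^+ 2 = rc (-1).
Proof. by apply: cext; rewrite expr2 ?ReM ?ImM /= ; ring. Qed.

Variable eps : R.
Hypothesis eps0 : 0 < eps.
Variable m : nat.
Variable a : 'I_m -> R.
Hypothesis ha : forall k, 0 < a k < 1.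

Lemma coefE n k : rc (Scoef eps n) * Lam eps a k ^+ (2 * n + 1) =
  iCR * rc (a k ^+ (2 * n + 1) / (2 * n + 1)%:R).
Proof.
have sen0 : Num.sqrt eps != 0 by rewrite gt_eqF // sqrtr_gt0.
rewrite /Lam exprMn -rcX exprD expr1 exprM i2 -rcX.
transitivity (iCR * rc (Scoef eps n * (-1) ^+ n * kap eps a k ^+ (2 * n + 1))).
  by rewrite !rcM; ring.
congr (_ * rc _).
rewrite /Scoef /kap.
set j := (2 * n + 1)%N.
have h1 : ((-1) ^+ n * (-1) ^+ n = 1 :> R) by rewrite -exprMn mulrNN mulr1 expr1n.
have h2 : (Num.sqrt eps ^+ j * (a k / Num.sqrt eps) ^+ j = a k ^+ j).
  by rewrite -exprMn mulrCA divff // mulr1.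
rewrite (_ : _ * _ * _ = ((-1) ^+ n * (-1) ^+ n) * (Num.sqrt eps ^+ j * (a k / Num.sqrt eps) ^+ j) / j%:R); last by ring.
by rewrite h1 h2 mul1r.
Qed.

Definition uu k (n : nat) : R := a k ^+ (2 * n + 1) / (2 * n + 1)%:R.

Lemma cvg_uu k : cvgn (series (uu k)).
Proof.
have [a0 a1] := andP (ha k).
apply: (@series_le_cvg _ _ (geometric 1 (a k))).
- by move=> n; rewrite /uu divr_ge0 // exprn_ge0 // ltW.
- by move=> n; rewrite /= mul1r exprn_ge0 // ltW.
- move=> n; rewrite /uu /= mul1r.
  apply: (@le_trans _ _ (a k ^+ (2 * n + 1))).
    rewrite ler_pdivrMr; last by rewrite ltr0n addn1.
    apply: ler_peMr; first by rewrite exprn_ge0 // ltW.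
    by rewrite ler1n addn1.
  apply: ler_wiXn2l; rewrite ?ltW //.
  by rewrite (leq_trans _ (leq_addr 1 _)) // mul2n -addnn leq_addr.
- by apply: is_cvg_geometric_series; rewrite ger0_norm // ltW.
Qed.

Definition Tl k := limn (series (uu k)).

Lemma TN_cvg k : (fun N => series (uu k) N.+1) @ \oo --> Tl k.
Proof.
have h : series (uu k) @ \oo --> Tl k by exact: cvg_uu.
by rewrite -(cvg_shiftS (series (uu k))) in h.
Qed.

End Fin.

Unset Implicit Arguments.

Theorem lemma3p2 (R : realType) (eps : R) (heps : 0 < eps <= 1)
  (m : nat) (c : 'I_m -> complex.complex R) (a : 'I_m -> R)
  (ha : forall k, 0 < a k < 1) :
  in_dom_S eps (fun x => \sum_(k < m) c k * gauss eps (a k) x).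
Proof.
have eps0 : 0 < eps by case/andP: heps.
change (in_dom_S eps (fd eps a c)).
split; first exact: even_fd.
exists (fun n => fd eps a (fun k => c k * Lam eps a k ^+ (2 * n + 1))).
split; first by move=> n; exact: tpow_fd.
pose W k N := c k * (@iC R * rc (series (uu a k) N.+1 - Tl a k)).
exists (fun x => \sum_(k < m) (c k * (@iC R * rc (Tl a k))) * rc (ee eps a k x)).
split.
  by apply: L2_sum => k; apply: L2_scale; exact: L2_ee.
have rcB (x y : R) : rc (x - y) = rc x - rc y.
  by rewrite rcD; congr (_ + _); apply: cext => /=; rewrite ?oppr0.
have part N x : \sum_(n < N.+1) rc (Scoef eps n) * fd eps a (fun k => c k * Lam eps a k ^+ (2 * n + 1)) x
    = \sum_(k < m) (c k * (@iC R * rc (series (uu a k) N.+1))) * rc (ee eps a k x).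
  rewrite /fd; under eq_bigr => n _ do rewrite mulr_sumr.
  rewrite exchange_big /=; apply: eq_bigr => k _.
  rewrite /series /= big_mkord rc_sum mulr_sumr mulr_sumr mulr_suml.
  apply: eq_bigr => n _.
  rewrite /uu -(coefE eps0); ring.
rewrite (_ : (fun N => _) = (fun N => Q (fun x => \sum_(k < m) W k N * rc (ee eps a k x)))).
  apply: Q_cvg_sum => k; first exact: L2_ee.
  have TB : ((fun N => series (uu a k) N.+1 - Tl a k) @ \oo --> 0)%classic.
    rewrite -(subrr (Tl a k)); apply: cvgB; [exact: TN_cvg | exact: cvg_cst].
  rewrite (_ : (fun N => sqnorm (W k N)) = (fun N => sqnorm (c k) * ((series (uu a k) N.+1 - Tl a k) * (series (uu a k) N.+1 - Tl a k)))).
    rewrite -(mulr0 (sqnorm (c k))); apply: cvgM; first exact: cvg_cst.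
    by rewrite -(mulr0 0); apply: cvgM.
  by apply/funext => N; rewrite /W !sqnormM /sqnorm /=; ring.
apply/funext => N; rewrite /L2dist2 /Q; apply: eq_integral => x _.
congr (sqnorm _)%:E.
rewrite part -sumrB; apply: eq_bigr => k _.
rewrite /W rcB; ring.
Qed.
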